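(* Let $\ell\ge2$ and $m\ge1$ be integers, and define $T\colon\mathbb{C}^2\to\mathbb{C}^2$ by $T(z,w)=\bigl(w,\ z^\ell+\bar z\,w^m\bigr)$, regarded as a smooth map $\mathbb{R}^4\to\mathbb{R}^4$ with the complex orientations on source and target. Then the origin is the only point where $dT$ has rank $2$, and its index satisfies $\mathrm{ind}_0(T)=m(\ell-1)$.
   Context: Index of an isolated rank-$2$ point. Let $g\colon M\to N$ be a smooth map between oriented $4$-manifolds, and let $p$ be an isolated point with $\mathrm{rk}(dg_p)=2$. Choose oriented local coordinates $x=(x_1,\dots,x_4)$ centered at $p$ and $y$ centered at $g(p)$ in which \[ g(x)=\bigl(x_1,\ x_2,\ A(x),\ B(x)\bigr), \] where $A(0)=B(0)=0$ and the matrix $\begin{pmatrix}\partial A/\partial x_3&\partial A/\partial x_4\\ \partial B/\partial x_3&\partial B/\partial x_4\end{pmatrix}$ vanishes at $x=0$ and only there. The index $\mathrm{ind}_p(g)$ is the local degree at $0$ of the map \[ \hat g=\Bigl(\frac{\partial A}{\partial x_3},\ \frac{\partial B}{\partial x_3},\ \frac{\partial A}{\partial x_4},\ \frac{\partial B}{\partial x_4}\Bigr)\colon(\mathbb{R}^4,0)\to(\mathbb{R}^4,0), \] that is, the signed count of preimages near $0$ of a sufficiently small regular value. For $T$, writing $K(w,z)=z^\ell+\bar z w^m$ and using the complex coordinates $(w,z)$, this local degree equals the local degree at $0$ of \[ \kappa(w,z)=\Bigl(\frac{\partial K}{\partial z}+\frac{\partial K}{\partial\bar z},\ i\Bigl(\frac{\partial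 K}{\partial z}-\frac{\partial K}{\partial\bar z}\Bigr)\Bigr). \] *)

(* Defs.v *)
From Stdlib Require Import Reals Lra Lia ZArith List.
Open Scope R_scope.

Record R4 := mkR4 { c0 : R; c1 : R; c2 : R; c3 : R }.

Definition coord (v : R4) (i : nat) : R :=
  match i with 0%nat => c0 v | 1%nat => c1 v | 2%nat => c2 v | 3%nat => c3 v | _ => 0 end.

Definition ofFun (f : nat -> R) : R4 := mkR4 (f 0%nat) (f 1%nat) (f 2%nat) (f 3%nat).

Definition zero4 : R4 := mkR4 0 0 0 0.
Definition vadd (u v : R4) : R4 := ofFun (fun i => coord u i + coord v i).
Definition vsub (u v : R4) : R4 := ofFun (fun i => coord u i - coord v i).
Definition vscale (a : R) (v : R4) : R4 := ofFun (fun i => a * coord v i).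
Definition basis (i : nat) : R4 := ofFun (fun k => if Nat.eqb k i then 1 else 0).

Fixpoint sumn (n : nat) (f : nat -> R) : R :=
  match n with 0%nat => 0 | S n' => sumn n' f + f n' end.

Definition norm4 (v : R4) : R := sqrt (sumn 4 (fun i => coord v i ^ 2)).

Definition Mat := nat -> nat -> R.

Definition mulv (J : Mat) (h : R4) : R4 :=
  ofFun (fun i => sumn 4 (fun j => J i j * coord h j)).

Definition minor (M : Mat) (j : nat) : Mat :=
  fun i k => M (S i) (if Nat.ltb k j then k else S k).

Fixpoint detn (n : nat) (M : Mat) : R :=
  match n with
  | 0%nat => 1
  | S n' => sumn n (fun j => (-1) ^ j * M 0%nat j * detn n' (minor M j))
  end.

Definition det4 (M : Mat) : R := detn 4 M.

Definition cols_indep (J : Mat) (cols : list nat) : Prop :=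
  forall c : nat -> R,
    (forall i, (i < 4)%nat -> fold_right Rplus 0 (map (fun k => c k * J i k) cols) = 0) ->
    forall k, In k cols -> c k = 0.

Definition valid_cols (cols : list nat) : Prop :=
  NoDup cols /\ Forall (fun k => (k < 4)%nat) cols.

Definition rank4 (J : Mat) (r : nat) : Prop :=
  (exists cols, length cols = r /\ valid_cols cols /\ cols_indep J cols) /\
  (forall cols, length cols = S r -> valid_cols cols -> ~ cols_indep J cols).

Definition FDeriv (f : R4 -> R4) (x : R4) (J : Mat) : Prop :=
  forall eps, 0 < eps -> exists delta, 0 < delta /\
    forall h, norm4 h < delta ->
      norm4 (vsub (vsub (f (vadd x h)) (f x)) (mulv J h)) <= eps * norm4 h.

(** v is the partial derivative of F : R^4 -> R at x w.r.t. coordinate x_(i+1) *)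
Definition is_partial (F : R4 -> R) (i : nat) (x : R4) (v : R) : Prop :=
  derivable_pt_lim (fun t => F (vadd x (vscale t (basis i)))) 0 v.

(** * Local degree at 0 of a map (R^4,0) -> (R^4,0):
    the signed count of preimages near 0 of a sufficiently small regular value. *)
Definition sgnZ (a : R) : Z := if Rlt_dec 0 a then 1%Z else (-1)%Z.

Definition IsLocalDegree (f : R4 -> R4) (d : Z) : Prop :=
  f zero4 = zero4 /\
  exists r, 0 < r /\
    (forall x, norm4 x <= r -> f x = zero4 -> x = zero4) /\
    exists delta, 0 < delta /\
      forall y, norm4 y < delta ->
        (* y is a regular value of f restricted to the ball B_r *)
        (forall x, norm4 x < r -> f x = y -> exists J, FDeriv f x J /\ det4 J <> 0) ->
        exists pts : list (R4 * Mat),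
          NoDup (map fst pts) /\
          (forall x, In x (map fst pts) <-> (norm4 x < r /\ f x = y)) /\
          Forall (fun p => FDeriv f (fst p) (snd p)) pts /\
          fold_right Z.add 0%Z (map (fun p => sgnZ (det4 (snd p))) pts) = d.

Definition C := (R * R)%type.
Definition Cadd (a b : C) : C := (fst a + fst b, snd a + snd b).
Definition Cmul (a b : C) : C :=
  (fst a * fst b - snd a * snd b, fst a * snd b + snd a * fst b).
Definition Cconj (a : C) : C := (fst a, - snd a).
Fixpoint Cpow (a : C) (n : nat) : C :=
  match n with 0%nat => (1, 0) | S n' => Cmul a (Cpow a n') end.

Definition Kmap (l m : nat) (w z : C) : C :=
  Cadd (Cpow z l) (Cmul (Cconj z) (Cpow w m)).

(** T(z,w) = (w, z^l + conj(z) w^m), in real coordinates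
    (Re z, Im z, Re w, Im w) -> (Re w', Im w'...) with complex orientations *)
Definition Tmap (l m : nat) (p : R4) : R4 :=
  let z := (c0 p, c1 p) in
  let w := (c2 p, c3 p) in
  let k := Kmap l m w z in
  mkR4 (fst w) (snd w) (fst k) (snd k).

(** Local normal form: oriented coordinates x = (Re w, Im w, Re z, Im z)
    on the source (an even permutation of (Re z, Im z, Re w, Im w)), identity
    coordinates on the target; then T = (x1, x2, A(x), B(x)). *)
Definition Acomp (l m : nat) (x : R4) : R := fst (Kmap l m (c0 x, c1 x) (c2 x, c3 x)).
Definition Bcomp (l m : nat) (x : R4) : R := snd (Kmap l m (c0 x, c1 x) (c2 x, c3 x)).

Definition is_ghat (l m : nat) (gh : R4 -> R4) : Prop :=
  forall x,
    is_partial (Acomp l m) 2 x (c0 (gh x)) /\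
    is_partial (Bcomp l m) 2 x (c1 (gh x)) /\
    is_partial (Acomp l m) 3 x (c2 (gh x)) /\
    is_partial (Bcomp l m) 3 x (c3 (gh x)).

(* Main.v *)
Require Import Defs.
From Stdlib Require Import Reals ZArith List.
From Stdlib Require Import Lra Lia Psatz FinFun.
Require Import Defs.
Open Scope R_scope.


Lemma pair_eq (a b c d : R) : a = c -> b = d -> (a,b) = (c,d).
Proof. intros; subst; reflexivity. Qed.

Definition Cnorm2 (z : Defs.C) : R := fst z * fst z + snd z * snd z.

Lemma Cnorm2_mul a b : Cnorm2 (Cmul a b) = Cnorm2 a * Cnorm2 b.
Proof. destruct a, b; unfold Cnorm2, Cmul; simpl; ring. Qed.

Lemma Cnorm2_pow z n : Cnorm2 (Cpow z n) = (Cnorm2 z)^n.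
Proof. induction n; simpl. unfold Cnorm2; simpl; ring. rewrite Cnorm2_mul, IHn; ring. Qed.

Lemma Cnorm2_nonneg z : 0 <= Cnorm2 z.
Proof. unfold Cnorm2; nra. Qed.

Lemma Cnorm2_0 z : Cnorm2 z = 0 -> z = (0,0).
Proof. destruct z as [a b]; unfold Cnorm2; simpl; intros; apply pair_eq; nra. Qed.

Lemma Cpow_0 n : (1 <= n)%nat -> Cpow (0,0) n = (0,0).
Proof. destruct n; [lia|]. intros _; simpl. destruct (Cpow (0,0) n). unfold Cmul; simpl. apply pair_eq; ring. Qed.

Lemma Cpow_nz z n : z <> (0,0) -> Cpow z n <> (0,0).
Proof.
  intros Hz H. apply Hz. apply Cnorm2_0.
  assert (Cnorm2 (Cpow z n) = 0) by (rewrite H; unfold Cnorm2; simpl; ring).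
  rewrite Cnorm2_pow in H0. destruct (Req_dec (Cnorm2 z) 0); auto.
  exfalso; apply (pow_nonzero _ n H1 H0).
Qed.

Lemma dl_ext f x l l' : derivable_pt_lim f x l -> l = l' -> derivable_pt_lim f x l'.
Proof. intros; subst; auto. Qed.

Lemma dconst a x : derivable_pt_lim (fun _ => a) x 0.
Proof. apply (derivable_pt_lim_const a x). Qed.

Lemma dlin a k : derivable_pt_lim (fun t => a + t * k) 0 k.
Proof.
  pose proof (derivable_pt_lim_mult id (fct_cte k) 0 1 0 (derivable_pt_lim_id 0) (derivable_pt_lim_const k 0)) as H.
  pose proof (derivable_pt_lim_plus (fct_cte a) (id * fct_cte k)%F 0 0 _ (derivable_pt_lim_const a 0) H) as H2.
  eapply dl_ext. exact H2. unfold fct_cte, id; ring.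
Qed.

Lemma dplus f g x a b : derivable_pt_lim f x a -> derivable_pt_lim g x b ->
  derivable_pt_lim (fun t => f t + g t) x (a + b).
Proof. intros; apply (derivable_pt_lim_plus f g); auto. Qed.
Lemma dminus f g x a b : derivable_pt_lim f x a -> derivable_pt_lim g x b ->
  derivable_pt_lim (fun t => f t - g t) x (a - b).
Proof. intros; apply (derivable_pt_lim_minus f g); auto. Qed.
Lemma dopp f x a : derivable_pt_lim f x a -> derivable_pt_lim (fun t => - f t) x (- a).
Proof. intros; apply (derivable_pt_lim_opp f); auto. Qed.
Lemma dmul f g x a b : derivable_pt_lim f x a -> derivable_pt_lim g x b ->
  derivable_pt_lim (fun t => f t * g t) x (a * g x + f x * b).
Proof. intros; apply (derivable_pt_lim_mult f g); auto. Qed.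

Definition CD (f : R -> Defs.C) (d : Defs.C) : Prop :=
  derivable_pt_lim (fun t => fst (f t)) 0 (fst d) /\ derivable_pt_lim (fun t => snd (f t)) 0 (snd d).

Lemma CD_const c : CD (fun _ => c) (0,0).
Proof. split; apply dconst. Qed.

Lemma CD_lin a b k1 k2 : CD (fun t => (a + t * k1, b + t * k2)) (k1, k2).
Proof. split; apply dlin. Qed.

Lemma CD_add f g df dg : CD f df -> CD g dg -> CD (fun t => Cadd (f t) (g t)) (Cadd df dg).
Proof. intros [H1 H2] [H3 H4]; split; simpl; apply dplus; auto. Qed.

Lemma CD_mul f g df dg : CD f df -> CD g dg ->
  CD (fun t => Cmul (f t) (g t)) (Cadd (Cmul (f 0) dg) (Cmul df (g 0))).
Proof.
  intros [H1 H2] [H3 H4]; split; simpl.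
  - eapply dl_ext. apply dminus; apply dmul; eauto. cbv beta; ring.
  - eapply dl_ext. apply dplus; apply dmul; eauto. cbv beta; ring.
Qed.

Lemma CD_conj f df : CD f df -> CD (fun t => Cconj (f t)) (Cconj df).
Proof. intros [H1 H2]; split; simpl; auto. apply dopp; auto. Qed.

Fixpoint dpow (z d : Defs.C) (n : nat) : Defs.C :=
  match n with 0%nat => (0,0) | S n' => Cadd (Cmul z (dpow z d n')) (Cmul d (Cpow z n')) end.

Lemma CD_pow f df n : CD f df -> CD (fun t => Cpow (f t) n) (dpow (f 0) df n).
Proof.
  intros H. induction n; simpl.
  - apply CD_const.
  - apply (CD_mul f (fun t => Cpow (f t) n)); auto.
Qed.

Lemma dpow_eq z d n : dpow z d n = Cmul (INR n, 0) (Cmul (Cpow z (pred n)) d).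
Proof.
  induction n.
  - simpl. destruct d. unfold Cmul; simpl. f_equal; ring.
  - simpl dpow. rewrite IHn. rewrite S_INR. destruct n.
    + simpl. destruct z, d. unfold Cmul, Cadd; simpl. apply pair_eq; ring.
    + simpl pred. simpl Cpow. destruct (Cpow z n) as [u v]. destruct z as [z1 z2], d as [d1 d2].
      unfold Cmul, Cadd; simpl. apply pair_eq; ring.
Qed.

Definition Kder (l m : nat) (w0 z0 dw dz : Defs.C) : Defs.C :=
  Cadd (dpow z0 dz l) (Cadd (Cmul (Cconj z0) (dpow w0 dw m)) (Cmul (Cconj dz) (Cpow w0 m))).

Lemma CD_Kmap l m w z dw dz : CD w dw -> CD z dz ->
  CD (fun t => Kmap l m (w t) (z t)) (Kder l m (w 0) (z 0) dw dz).
Proof.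
  intros Hw Hz. unfold Kmap, Kder.
  apply (CD_add (fun t => Cpow (z t) l) (fun t => Cmul (Cconj (z t)) (Cpow (w t) m))).
  - apply CD_pow; auto.
  - pose proof (CD_mul (fun t => Cconj (z t)) (fun t => Cpow (w t) m) _ _ (CD_conj _ _ Hz) (CD_pow _ _ m Hw)) as H.
    destruct H as [H1 H2]; split; simpl in *.
    + eapply dl_ext; [exact H1|]. ring.
    + eapply dl_ext; [exact H2|]. ring.
Qed.

Lemma norm4_eq v : norm4 v = sqrt (c0 v * c0 v + c1 v * c1 v + c2 v * c2 v + c3 v * c3 v).
Proof. unfold norm4; simpl. f_equal; ring. Qed.

Lemma norm4_nonneg v : 0 <= norm4 v.
Proof. unfold norm4; apply sqrt_pos. Qed.

Lemma abs_le_sqrt x y : x * x <= y -> Rabs x <= sqrt y.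
Proof. intros H. rewrite <- sqrt_Rsqr_abs. apply sqrt_le_1_alt. unfold Rsqr; lra. Qed.

Lemma coord_le v i : Rabs (coord v i) <= norm4 v.
Proof.
  rewrite norm4_eq. destruct i as [|[|[|[|i]]]]; simpl; apply abs_le_sqrt; try nra.
  all: rewrite Rabs_R0; apply sqrt_pos.
Qed.
Lemma c0_le v : Rabs (c0 v) <= norm4 v. Proof. apply (coord_le v 0). Qed.
Lemma c1_le v : Rabs (c1 v) <= norm4 v. Proof. apply (coord_le v 1). Qed.
Lemma c2_le v : Rabs (c2 v) <= norm4 v. Proof. apply (coord_le v 2). Qed.
Lemma c3_le v : Rabs (c3 v) <= norm4 v. Proof. apply (coord_le v 3). Qed.

Lemma norm4_le_sum v : norm4 v <= Rabs (c0 v) + Rabs (c1 v) + Rabs (c2 v) + Rabs (c3 v).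
Proof.
  rewrite norm4_eq.
  set (A := Rabs (c0 v) + Rabs (c1 v) + Rabs (c2 v) + Rabs (c3 v)).
  assert (HA : 0 <= A) by (unfold A; pose proof (Rabs_pos (c0 v)); pose proof (Rabs_pos (c1 v));
     pose proof (Rabs_pos (c2 v)); pose proof (Rabs_pos (c3 v)); lra).
  rewrite <- (sqrt_square A HA). apply sqrt_le_1_alt.
  unfold A.
  pose proof (Rabs_pos (c0 v)); pose proof (Rabs_pos (c1 v)); pose proof (Rabs_pos (c2 v)); pose proof (Rabs_pos (c3 v)).
  assert (forall x, x * x = Rabs x * Rabs x) as E by (intro x; pose proof (Rsqr_abs x); unfold Rsqr in *; lra).
  rewrite (E (c0 v)), (E (c1 v)), (E (c2 v)), (E (c3 v)).
  nra.
Qed.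

Definition dot (d h : R4) : R := c0 d * c0 h + c1 d * c1 h + c2 d * c2 h + c3 d * c3 h.
Definition Mn (d : R4) : R := Rabs (c0 d) + Rabs (c1 d) + Rabs (c2 d) + Rabs (c3 d).

Lemma Mn_nonneg d : 0 <= Mn d.
Proof. unfold Mn. pose proof (Rabs_pos (c0 d)); pose proof (Rabs_pos (c1 d)); pose proof (Rabs_pos (c2 d)); pose proof (Rabs_pos (c3 d)); lra. Qed.

Lemma dot_bound d h : Rabs (dot d h) <= Mn d * norm4 h.
Proof.
  unfold dot, Mn.
  pose proof (c0_le h); pose proof (c1_le h); pose proof (c2_le h); pose proof (c3_le h).
  pose proof (Rabs_pos (c0 d)); pose proof (Rabs_pos (c1 d)); pose proof (Rabs_pos (c2 d)); pose proof (Rabs_pos (c3 d)).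
  eapply Rle_trans. apply Rabs_triang. eapply Rle_trans. apply Rplus_le_compat_r. apply Rabs_triang.
  eapply Rle_trans. apply Rplus_le_compat_r. apply Rplus_le_compat_r. apply Rabs_triang.
  rewrite !Rabs_mult.
  assert (Rabs (c0 d) * Rabs (c0 h) <= Rabs (c0 d) * norm4 h) by (apply Rmult_le_compat_l; auto).
  assert (Rabs (c1 d) * Rabs (c1 h) <= Rabs (c1 d) * norm4 h) by (apply Rmult_le_compat_l; auto).
  assert (Rabs (c2 d) * Rabs (c2 h) <= Rabs (c2 d) * norm4 h) by (apply Rmult_le_compat_l; auto).
  assert (Rabs (c3 d) * Rabs (c3 h) <= Rabs (c3 d) * norm4 h) by (apply Rmult_le_compat_l; auto).
  lra.
Qed.

Definition FD1 (g : R4 -> R) (x d : R4) : Prop :=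
  forall eps, 0 < eps -> exists delta, 0 < delta /\
    forall h, norm4 h < delta -> Rabs (g (vadd x h) - g x - dot d h) <= eps * norm4 h.

Definition FD1ex (g : R4 -> R) (x : R4) : Prop := exists d, FD1 g x d.

Lemma FD1ex_const a x : FD1ex (fun _ => a) x.
Proof.
  exists (mkR4 0 0 0 0). intros eps He. exists 1; split; [lra|]. intros h _.
  unfold dot; simpl. replace (a - a - _) with 0 by ring. rewrite Rabs_R0.
  pose proof (norm4_nonneg h); nra.
Qed.

Lemma FD1_zero_rem (g : R4 -> R) x d : (forall h, g (vadd x h) - g x - dot d h = 0) -> FD1 g x d.
Proof.
  intros H eps He. exists 1; split; [lra|]. intros h _. rewrite H, Rabs_R0.
  pose proof (norm4_nonneg h); nra.
Qed.

Lemma FD1ex_c0 x : FD1ex (fun p => c0 p) x.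
Proof. exists (mkR4 1 0 0 0). apply FD1_zero_rem. intros; unfold dot; simpl; ring. Qed.
Lemma FD1ex_c1 x : FD1ex (fun p => c1 p) x.
Proof. exists (mkR4 0 1 0 0). apply FD1_zero_rem. intros; unfold dot; simpl; ring. Qed.
Lemma FD1ex_c2 x : FD1ex (fun p => c2 p) x.
Proof. exists (mkR4 0 0 1 0). apply FD1_zero_rem. intros; unfold dot; simpl; ring. Qed.
Lemma FD1ex_c3 x : FD1ex (fun p => c3 p) x.
Proof. exists (mkR4 0 0 0 1). apply FD1_zero_rem. intros; unfold dot; simpl; ring. Qed.

Definition vlin (a : R) (u : R4) (b : R) (v : R4) : R4 :=
  mkR4 (a * c0 u + b * c0 v) (a * c1 u + b * c1 v) (a * c2 u + b * c2 v) (a * c3 u + b * c3 v).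

Lemma dot_vlin a u b v h : dot (vlin a u b v) h = a * dot u h + b * dot v h.
Proof. unfold dot, vlin; simpl; ring. Qed.

Lemma FD1ex_lin (g1 g2 : R4 -> R) a b x : FD1ex g1 x -> FD1ex g2 x ->
  FD1ex (fun p => a * g1 p + b * g2 p) x.
Proof.
  intros [d1 H1] [d2 H2]. exists (vlin a d1 b d2). intros eps He.
  set (e := eps / (Rabs a + Rabs b + 1)).
  assert (Hpos : 0 < Rabs a + Rabs b + 1) by (pose proof (Rabs_pos a); pose proof (Rabs_pos b); lra).
  assert (He1 : 0 < e) by (unfold e; apply Rdiv_lt_0_compat; lra).
  destruct (H1 e He1) as [dl1 [Hd1 K1]]. destruct (H2 e He1) as [dl2 [Hd2 K2]].
  exists (Rmin dl1 dl2); split. apply Rmin_Rgt_r; lra.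
  intros h Hh. pose proof (Rmin_l dl1 dl2); pose proof (Rmin_r dl1 dl2).
  specialize (K1 h ltac:(lra)). specialize (K2 h ltac:(lra)).
  rewrite dot_vlin.
  replace (a * g1 (vadd x h) + b * g2 (vadd x h) - (a * g1 x + b * g2 x) - (a * dot d1 h + b * dot d2 h))
    with (a * (g1 (vadd x h) - g1 x - dot d1 h) + b * (g2 (vadd x h) - g2 x - dot d2 h)) by ring.
  eapply Rle_trans. apply Rabs_triang. rewrite !Rabs_mult.
  pose proof (Rabs_pos a); pose proof (Rabs_pos b); pose proof (norm4_nonneg h).
  assert (Rabs a * Rabs (g1 (vadd x h) - g1 x - dot d1 h) <= Rabs a * (e * norm4 h)) by (apply Rmult_le_compat_l; auto).
  assert (Rabs b * Rabs (g2 (vadd x h) - g2 x - dot d2 h) <= Rabs b * (e * norm4 h)) by (apply Rmult_le_compat_l; auto).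
  assert (e * (Rabs a + Rabs b + 1) = eps) by (unfold e; field; lra).
  assert (0 <= e * norm4 h) by nra.
  nra.
Qed.

Lemma FD1ex_add g1 g2 x : FD1ex g1 x -> FD1ex g2 x -> FD1ex (fun p => g1 p + g2 p) x.
Proof.
  intros H1 H2. destruct (FD1ex_lin g1 g2 1 1 x H1 H2) as [d H]. exists d.
  intros eps He. destruct (H eps He) as [dl [Hd K]]. exists dl; split; auto. intros h Hh.
  specialize (K h Hh). replace (g1 (vadd x h) + g2 (vadd x h) - (g1 x + g2 x)) with
   (1 * g1 (vadd x h) + 1 * g2 (vadd x h) - (1 * g1 x + 1 * g2 x)) by ring. auto.
Qed.

Lemma FD1ex_sub g1 g2 x : FD1ex g1 x -> FD1ex g2 x -> FD1ex (fun p => g1 p - g2 p) x.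
Proof.
  intros H1 H2. destruct (FD1ex_lin g1 g2 1 (-1) x H1 H2) as [d H]. exists d.
  intros eps He. destruct (H eps He) as [dl [Hd K]]. exists dl; split; auto. intros h Hh.
  specialize (K h Hh). replace (g1 (vadd x h) - g2 (vadd x h) - (g1 x - g2 x)) with
   (1 * g1 (vadd x h) + -1 * g2 (vadd x h) - (1 * g1 x + -1 * g2 x)) by ring. auto.
Qed.

Lemma FD1ex_opp g x : FD1ex g x -> FD1ex (fun p => - g p) x.
Proof.
  intros H1. destruct (FD1ex_lin g g (-1) 0 x H1 H1) as [d H]. exists d.
  intros eps He. destruct (H eps He) as [dl [Hd K]]. exists dl; split; auto. intros h Hh.
  specialize (K h Hh). replace (- g (vadd x h) - - g x) with
   (-1 * g (vadd x h) + 0 * g (vadd x h) - (-1 * g x + 0 * g x)) by ring. auto.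
Qed.

Lemma FD1ex_mul g1 g2 x : FD1ex g1 x -> FD1ex g2 x -> FD1ex (fun p => g1 p * g2 p) x.
Proof.
  intros [d1 H1] [d2 H2]. exists (vlin (g1 x) d2 (g2 x) d1). intros eps He.
  set (G := Rabs (g1 x) + Rabs (g2 x) + 1).
  set (M := (Mn d1 + 1) * (Mn d2 + 1)).
  pose proof (Rabs_pos (g1 x)); pose proof (Rabs_pos (g2 x)).
  pose proof (Mn_nonneg d1); pose proof (Mn_nonneg d2).
  assert (HG : 0 < G) by (unfold G; lra).
  assert (HM : 0 < M) by (unfold M; nra).
  set (e1 := Rmin 1 (eps / (2 * G))).
  assert (He1 : 0 < e1) by (unfold e1; apply Rmin_glb_lt; [lra| apply Rdiv_lt_0_compat; lra]).
  assert (He1a : e1 <= 1) by apply Rmin_l.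
  assert (He1b : e1 <= eps / (2 * G)) by apply Rmin_r.
  destruct (H1 e1 He1) as [dl1 [Hd1 K1]]. destruct (H2 e1 He1) as [dl2 [Hd2 K2]].
  assert (Hd3 : 0 < eps / (2 * M)) by (apply Rdiv_lt_0_compat; lra).
  exists (Rmin (Rmin dl1 dl2) (eps / (2 * M))); split.
  { apply Rmin_glb_lt; [apply Rmin_glb_lt|]; lra. }
  intros h Hh.
  pose proof (Rmin_l (Rmin dl1 dl2) (eps / (2 * M))); pose proof (Rmin_r (Rmin dl1 dl2) (eps / (2 * M))).
  pose proof (Rmin_l dl1 dl2); pose proof (Rmin_r dl1 dl2).
  specialize (K1 h ltac:(lra)). specialize (K2 h ltac:(lra)).
  rewrite dot_vlin.
  set (n := norm4 h) in *. assert (Hn : 0 <= n) by apply norm4_nonneg.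
  set (D1 := dot d1 h) in *. set (D2 := dot d2 h) in *.
  assert (B1 : Rabs D1 <= Mn d1 * n) by apply dot_bound.
  assert (B2 : Rabs D2 <= Mn d2 * n) by apply dot_bound.
  set (u := g1 (vadd x h)) in *. set (v := g2 (vadd x h)) in *.
  set (a := g1 x) in *. set (b := g2 x) in *.
  set (E := u - a - D1) in *. set (F := v - b - D2) in *.
  replace (u * v - a * b - (a * D2 + b * D1)) with (a * F + b * E + (D1 + E) * (D2 + F)) by (unfold E, F; ring).
  assert (T1 : Rabs (a * F) <= Rabs a * (e1 * n)) by (rewrite Rabs_mult; apply Rmult_le_compat_l; auto).
  assert (T2 : Rabs (b * E) <= Rabs b * (e1 * n)) by (rewrite Rabs_mult; apply Rmult_le_compat_l; auto).
  assert (T3 : Rabs (D1 + E) <= (Mn d1 + 1) * n) by (eapply Rle_trans; [apply Rabs_triang|]; nra).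
  assert (T4 : Rabs (D2 + F) <= (Mn d2 + 1) * n) by (eapply Rle_trans; [apply Rabs_triang|]; nra).
  assert (T5 : Rabs ((D1 + E) * (D2 + F)) <= M * n * n).
  { rewrite Rabs_mult. unfold M.
    replace ((Mn d1 + 1) * (Mn d2 + 1) * n * n) with (((Mn d1 + 1) * n) * ((Mn d2 + 1) * n)) by ring.
    apply Rmult_le_compat; auto using Rabs_pos. }
  assert (T6 : M * n * n <= eps / 2 * n).
  { assert (n <= eps / (2 * M)) by lra.
    assert (Q : M * n <= M * (eps / (2 * M))) by (apply Rmult_le_compat_l; lra).
    replace (M * (eps / (2 * M))) with (eps / 2) in Q by (field; lra).
    nra. }
  assert (T7 : (Rabs a + Rabs b) * (e1 * n) <= eps / 2 * n).
  { assert (Q : G * e1 <= G * (eps / (2 * G))) by (apply Rmult_le_compat_l; lra).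
    replace (G * (eps / (2 * G))) with (eps / 2) in Q by (field; lra).
    unfold G in Q. nra. }
  eapply Rle_trans. apply Rabs_triang.
  eapply Rle_trans. apply Rplus_le_compat_r. apply Rabs_triang.
  lra.
Qed.

Definition CFD (f : R4 -> Defs.C) (x : R4) : Prop :=
  FD1ex (fun p => fst (f p)) x /\ FD1ex (fun p => snd (f p)) x.

Lemma CFD_pair g k x : FD1ex g x -> FD1ex k x -> CFD (fun p => (g p, k p)) x.
Proof. intros; split; auto. Qed.

Lemma CFD_const c x : CFD (fun _ => c) x.
Proof. split; apply FD1ex_const. Qed.

Lemma CFD_add f g x : CFD f x -> CFD g x -> CFD (fun p => Cadd (f p) (g p)) x.
Proof. intros [] []; split; simpl; apply FD1ex_add; auto. Qed.

Lemma CFD_mul f g x : CFD f x -> CFD g x -> CFD (fun p => Cmul (f p) (g p)) x.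
Proof.
  intros [] []; split; simpl.
  - apply (FD1ex_sub (fun p => fst (f p) * fst (g p)) (fun p => snd (f p) * snd (g p)));
      apply FD1ex_mul; auto.
  - apply (FD1ex_add (fun p => fst (f p) * snd (g p)) (fun p => snd (f p) * fst (g p)));
      apply FD1ex_mul; auto.
Qed.

Lemma CFD_conj f x : CFD f x -> CFD (fun p => Cconj (f p)) x.
Proof. intros []; split; simpl; auto. apply (FD1ex_opp (fun p => snd (f p))); auto. Qed.

Lemma CFD_pow f x n : CFD f x -> CFD (fun p => Cpow (f p) n) x.
Proof.
  intros H; induction n; simpl.
  - apply CFD_const.
  - apply (CFD_mul f (fun p => Cpow (f p) n)); auto.
Qed.

Lemma CFD_Kmap l m w z x : CFD w x -> CFD z x -> CFD (fun p => Kmap l m (w p) (z p)) x.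
Proof.
  intros Hw Hz. unfold Kmap.
  apply (CFD_add (fun p => Cpow (z p) l) (fun p => Cmul (Cconj (z p)) (Cpow (w p) m))).
  - apply CFD_pow; auto.
  - apply (CFD_mul (fun p => Cconj (z p)) (fun p => Cpow (w p) m)).
    apply CFD_conj; auto. apply CFD_pow; auto.
Qed.

Lemma coord_vsub a b i : coord (vsub a b) i = coord a i - coord b i.
Proof. destruct i as [|[|[|[|i]]]]; simpl; ring. Qed.

Lemma FDeriv_of (f : R4 -> R4) x :
  FD1ex (fun p => c0 (f p)) x -> FD1ex (fun p => c1 (f p)) x ->
  FD1ex (fun p => c2 (f p)) x -> FD1ex (fun p => c3 (f p)) x -> exists J, FDeriv f x J.
Proof.
  intros [d0 H0] [d1 H1] [d2 H2] [d3 H3].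
  exists (fun i j => match i with 0%nat => coord d0 j | 1%nat => coord d1 j | 2%nat => coord d2 j | _ => coord d3 j end).
  intros eps He. assert (He4 : 0 < eps / 4) by lra.
  destruct (H0 _ He4) as [e0 [He0 K0]]. destruct (H1 _ He4) as [e1 [He1 K1]].
  destruct (H2 _ He4) as [e2 [He2 K2]]. destruct (H3 _ He4) as [e3 [He3 K3]].
  exists (Rmin (Rmin e0 e1) (Rmin e2 e3)). split.
  { repeat apply Rmin_glb_lt; lra. }
  intros h Hh.
  pose proof (Rmin_l (Rmin e0 e1) (Rmin e2 e3)); pose proof (Rmin_r (Rmin e0 e1) (Rmin e2 e3)).
  pose proof (Rmin_l e0 e1); pose proof (Rmin_r e0 e1); pose proof (Rmin_l e2 e3); pose proof (Rmin_r e2 e3).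
  specialize (K0 h ltac:(lra)); specialize (K1 h ltac:(lra)); specialize (K2 h ltac:(lra)); specialize (K3 h ltac:(lra)).
  eapply Rle_trans. apply norm4_le_sum.
  unfold dot in *. simpl.
  replace (c0 (f (vadd x h)) - c0 (f x) - (0 + c0 d0 * c0 h + c1 d0 * c1 h + c2 d0 * c2 h + c3 d0 * c3 h))
    with (c0 (f (vadd x h)) - c0 (f x) - (c0 d0 * c0 h + c1 d0 * c1 h + c2 d0 * c2 h + c3 d0 * c3 h)) by ring.
  replace (c1 (f (vadd x h)) - c1 (f x) - (0 + c0 d1 * c0 h + c1 d1 * c1 h + c2 d1 * c2 h + c3 d1 * c3 h))
    with (c1 (f (vadd x h)) - c1 (f x) - (c0 d1 * c0 h + c1 d1 * c1 h + c2 d1 * c2 h + c3 d1 * c3 h)) by ring.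
  replace (c2 (f (vadd x h)) - c2 (f x) - (0 + c0 d2 * c0 h + c1 d2 * c1 h + c2 d2 * c2 h + c3 d2 * c3 h))
    with (c2 (f (vadd x h)) - c2 (f x) - (c0 d2 * c0 h + c1 d2 * c1 h + c2 d2 * c2 h + c3 d2 * c3 h)) by ring.
  replace (c3 (f (vadd x h)) - c3 (f x) - (0 + c0 d3 * c0 h + c1 d3 * c1 h + c2 d3 * c2 h + c3 d3 * c3 h))
    with (c3 (f (vadd x h)) - c3 (f x) - (c0 d3 * c0 h + c1 d3 * c1 h + c2 d3 * c2 h + c3 d3 * c3 h)) by ring.
  lra.
Qed.

Lemma vadd_scale0 x v : vadd x (vscale 0 v) = x.
Proof. destruct x; unfold vadd, vscale, ofFun; simpl; f_equal; ring. Qed.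

Lemma norm4_scale_basis t j : (j < 4)%nat -> norm4 (vscale t (basis j)) = Rabs t.
Proof.
  intros Hj. rewrite norm4_eq. rewrite <- sqrt_Rsqr_abs. unfold Rsqr. f_equal.
  destruct j as [|[|[|[|j]]]]; simpl; try ring; lia.
Qed.

Lemma coord_mulv_basis J t i j : (i < 4)%nat -> (j < 4)%nat ->
  coord (mulv J (vscale t (basis j))) i = J i j * t.
Proof.
  intros Hi Hj.
  destruct i as [|[|[|[|i]]]]; try lia; destruct j as [|[|[|[|j]]]]; try lia; simpl; ring.
Qed.

Lemma FDeriv_partial f x J i j : (i < 4)%nat -> (j < 4)%nat -> FDeriv f x J ->
  derivable_pt_lim (fun t => coord (f (vadd x (vscale t (basis j)))) i) 0 (J i j).
Proof.
  intros Hi Hj HF eps He.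
  assert (He2 : 0 < eps / 2) by lra.
  destruct (HF _ He2) as [d [Hd K]].
  exists (mkposreal d Hd). intros t Ht0 Ht. simpl in Ht.
  rewrite Rplus_0_l.
  rewrite vadd_scale0.
  specialize (K (vscale t (basis j))). rewrite norm4_scale_basis in K by auto.
  specialize (K Ht).
  pose proof (coord_le (vsub (vsub (f (vadd x (vscale t (basis j)))) (f x)) (mulv J (vscale t (basis j)))) i) as C.
  rewrite !coord_vsub, coord_mulv_basis in C by auto.
  set (A := coord (f (vadd x (vscale t (basis j)))) i) in *.
  set (B := coord (f x) i) in *.
  assert (Hat : 0 < Rabs t) by (apply Rabs_pos_lt; auto).
  replace ((A - B) / t - J i j) with ((A - B - J i j * t) / t) by (field; auto).
  unfold Rdiv. rewrite Rabs_mult, Rabs_inv.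
  apply (Rmult_lt_reg_r (Rabs t)); auto.
  rewrite Rmult_assoc, Rinv_l by lra. nra.
Qed.

Lemma Cpow1 z : Cpow z 1 = z.
Proof. destruct z; unfold Cpow, Cmul; simpl; apply pair_eq; ring. Qed.

Lemma Cnorm2_lt1 z n c : (1 <= n)%nat -> Cpow z n = c -> Cnorm2 c < 1 -> Cnorm2 z < 1.
Proof.
  intros Hn Hz Hc. subst c. rewrite Cnorm2_pow in Hc.
  destruct (Rlt_dec (Cnorm2 z) 1); auto. exfalso.
  pose proof (Rle_pow (Cnorm2 z) 0 n ltac:(lra) ltac:(lia)). simpl in H. lra.
Qed.

Lemma pow_lt_strict x y n : 0 <= x -> x < y -> (1 <= n)%nat -> x ^ n < y ^ n.
Proof.
  intros Hx Hxy Hn. induction n; [lia|].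
  destruct n. simpl; lra.
  assert (x ^ S n < y ^ S n) by (apply IHn; lia).
  assert (0 <= x ^ S n) by (apply pow_le; auto).
  simpl in *. nra.
Qed.

Lemma pow_inj_pos x y n : 0 < x -> 0 < y -> (1 <= n)%nat -> x ^ n = y ^ n -> x = y.
Proof.
  intros Hx Hy Hn E. destruct (Rtotal_order x y) as [H|[H|H]]; auto.
  - pose proof (pow_lt_strict x y n ltac:(lra) H Hn); lra.
  - pose proof (pow_lt_strict y x n ltac:(lra) H Hn); lra.
Qed.

Lemma polar a b : (a, b) <> (0, 0) ->
  exists th, a = sqrt (a*a + b*b) * cos th /\ b = sqrt (a*a + b*b) * sin th.
Proof.
  intros Hab. set (r := sqrt (a*a+b*b)).
  assert (Hpos : 0 < a*a + b*b).
  { destruct (Req_dec a 0); destruct (Req_dec b 0); subst; try nra. exfalso; auto. }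
  assert (Hr : 0 < r) by (apply sqrt_lt_R0; auto).
  assert (Hr2 : r * r = a*a+b*b) by (apply sqrt_sqrt; lra).
  set (u := a / r).
  assert (Hu2 : u * u <= 1).
  { unfold u. replace (a / r * (a / r)) with (a*a / (r*r)) by (field; lra).
    rewrite Hr2. apply Rmult_le_reg_r with (a*a+b*b); auto. unfold Rdiv. rewrite Rmult_assoc, Rinv_l by lra. nra. }
  assert (Hu : -1 <= u <= 1) by (split; nra).
  assert (Hs : sqrt (1 - u²) = Rabs b / r).
  { replace (1 - u²) with ((b / r)²).
    rewrite sqrt_Rsqr_abs. unfold Rdiv. rewrite Rabs_mult, Rabs_inv, (Rabs_right r) by lra. auto.
    unfold u, Rsqr. apply Rmult_eq_reg_r with (r*r); [|nra].
    replace (b / r * (b / r) * (r * r)) with (b*b) by (field; lra).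
    replace ((1 - a / r * (a / r)) * (r * r)) with (r*r - a*a) by (field; lra). lra. }
  destruct (Rle_dec 0 b).
  - exists (acos u). rewrite cos_acos, sin_acos by auto. rewrite Hs, Rabs_right by lra.
    unfold u; split; field; lra.
  - exists (- acos u). rewrite cos_neg, sin_neg, cos_acos, sin_acos by auto. rewrite Hs, Rabs_left by lra.
    unfold u; split; field; lra.
Qed.

Lemma de_moivre r t n : Cpow (r * cos t, r * sin t) n = (r ^ n * cos (INR n * t), r ^ n * sin (INR n * t)).
Proof.
  induction n.
  - simpl. rewrite Rmult_0_l, cos_0, sin_0. apply pair_eq; ring.
  - simpl Cpow. rewrite IHn. rewrite S_INR.
    replace ((INR n + 1) * t) with (t + INR n * t) by ring.
    rewrite cos_plus, sin_plus. unfold Cmul; simpl. apply pair_eq; ring.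
Qed.

Lemma sin_2kPI t : sin (2 * IZR t * PI) = 0.
Proof. apply sin_eq_0_1. exists (2 * t)%Z. rewrite mult_IZR. simpl. ring. Qed.
Lemma cos_2kPI t : cos (2 * IZR t * PI) = 1.
Proof.
  replace (2 * IZR t * PI) with (2 * (IZR t * PI)) by ring. rewrite cos_2a_sin.
  rewrite sin_eq_0_1 by (exists t; auto). ring.
Qed.
Lemma cosZ x t : cos (x + 2 * IZR t * PI) = cos x.
Proof. rewrite cos_plus, sin_2kPI, cos_2kPI; ring. Qed.
Lemma sinZ x t : sin (x + 2 * IZR t * PI) = sin x.
Proof. rewrite sin_plus, sin_2kPI, cos_2kPI; ring. Qed.

Lemma same_angle A B : cos A = cos B -> sin A = sin B -> exists q : Z, A - B = 2 * IZR q * PI.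
Proof.
  intros Hc Hs.
  assert (H1 : cos (A - B) = 1).
  { rewrite cos_minus, Hc, Hs. pose proof (sin2_cos2 B). unfold Rsqr in H. lra. }
  replace (A - B) with (2 * ((A - B) / 2)) in H1 by field. rewrite cos_2a_sin in H1.
  assert (sin ((A - B) / 2) = 0) by nra.
  destruct (sin_eq_0_0 _ H) as [q Hq]. exists q. lra.
Qed.

Lemma Cpow_zero_root n z : (1 <= n)%nat -> Cpow z n <> (0,0) -> z <> (0,0).
Proof. intros Hn H E; subst; apply H; apply Cpow_0; auto. Qed.

Lemma roots_list n c : (1 <= n)%nat -> (c <> (0,0) \/ n = 1%nat) ->
  exists L : list Defs.C, length L = n /\ NoDup L /\ forall z, In z L <-> Cpow z n = c.
Proof.
  intros Hn Hc. destruct (Nat.eq_dec n 1) as [E|E].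
  { subst. exists (c :: nil). split; [reflexivity|]. split. constructor; [simpl; tauto| constructor].
    intros z. rewrite Cpow1. simpl. split; [intros [H|H]; [auto|tauto] | intros; left; auto]. }
  assert (Hc0 : c <> (0,0)) by (destruct Hc; [auto|lia]). clear Hc.
  destruct c as [a b].
  assert (Hpos : 0 < a*a + b*b).
  { destruct (Req_dec a 0); destruct (Req_dec b 0); subst; try nra. exfalso; auto. }
  destruct (polar a b Hc0) as [th [Ha Hb]].
  set (rho := sqrt (a*a+b*b)) in *.
  assert (Hrho : 0 < rho) by (apply sqrt_lt_R0; auto).
  assert (HnR : 0 < INR n) by (apply lt_0_INR; lia).
  set (Rr := Rpower rho (/ INR n)).
  assert (HR : 0 < Rr) by (unfold Rr, Rpower; apply exp_pos).
  assert (HRn : Rr ^ n = rho).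
  { rewrite <- Rpower_pow by auto. unfold Rr. rewrite Rpower_mult.
    rewrite Rinv_l by lra. apply Rpower_1; auto. }
  set (ang := fun k : nat => (th + 2 * INR k * PI) / INR n).
  set (root := fun k : nat => (Rr * cos (ang k), Rr * sin (ang k))).
  assert (Hroot : forall k, Cpow (root k) n = (a, b)).
  { intros k. unfold root. rewrite de_moivre. rewrite HRn.
    replace (INR n * ang k) with (th + 2 * INR k * PI) by (unfold ang; field; lra).
    rewrite cos_period, sin_period. apply pair_eq; lra. }
  assert (Hinj : forall j k, (j < n)%nat -> (k < n)%nat -> root j = root k -> j = k).
  { intros j k Hj Hk Ejk. unfold root in Ejk. injection Ejk as E1 E2.
    apply Rmult_eq_reg_l in E1; [|lra]. apply Rmult_eq_reg_l in E2; [|lra].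
    destruct (same_angle _ _ E1 E2) as [q Hq].
    unfold ang in Hq.
    assert (Hq2 : INR j - INR k = IZR q * INR n).
    { assert (PI > 0) by apply PI_RGT_0.
      apply Rmult_eq_reg_r with (2 * PI / INR n); [| apply Rgt_not_eq; apply Rdiv_lt_0_compat; lra].
      replace ((INR j - INR k) * (2 * PI / INR n)) with ((th + 2 * INR j * PI) / INR n - (th + 2 * INR k * PI) / INR n) by (field; lra).
      rewrite Hq. field. lra. }
    rewrite !INR_IZR_INZ in Hq2. rewrite <- minus_IZR, <- mult_IZR in Hq2. apply eq_IZR in Hq2.
    assert (q = 0%Z).
    { destruct (Z.lt_trichotomy q 0) as [Q|[Q|Q]]; auto.
      - assert (q * Z.of_nat n <= - Z.of_nat n)%Z by nia. lia.
      - assert (q * Z.of_nat n >= Z.of_nat n)%Z by nia. lia. }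
    subst q. lia. }
  assert (Hcomp : forall z, Cpow z n = (a,b) -> exists k, (k < n)%nat /\ z = root k).
  { intros [x y] Hz.
    assert (Hxy : (x,y) <> (0,0)) by (apply (Cpow_zero_root n); auto; rewrite Hz; auto).
    assert (Hpos' : 0 < x*x + y*y).
    { destruct (Req_dec x 0) as [X|X]; destruct (Req_dec y 0) as [Y|Y];
      [exfalso; apply Hxy; rewrite X, Y; auto | nra | nra | nra]. }
    destruct (polar x y Hxy) as [ph [Hx Hy]].
    set (s := sqrt (x*x+y*y)) in *.
    assert (Hs : 0 < s) by (apply sqrt_lt_R0; auto).
    rewrite Hx, Hy, de_moivre in Hz. injection Hz as Ez1 Ez2.
    rewrite Ha in Ez1. rewrite Hb in Ez2.
    assert (Hsn : 0 < s ^ n) by (apply pow_lt; auto).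
    assert (Hsq : (s^n) * (s^n) = rho * rho).
    { pose proof (sin2_cos2 (INR n * ph)); pose proof (sin2_cos2 th). unfold Rsqr in *.
      transitivity ((s ^ n * cos (INR n * ph)) * (s ^ n * cos (INR n * ph)) + (s ^ n * sin (INR n * ph)) * (s ^ n * sin (INR n * ph))).
      nra. rewrite Ez1, Ez2. nra. }
    assert (Hsr : s ^ n = rho).
    { assert (Hf : (s ^ n - rho) * (s ^ n + rho) = 0) by (ring_simplify; lra).
      apply Rmult_integral in Hf. destruct Hf; lra. }
    assert (HsR : s = Rr) by (apply (pow_inj_pos s Rr n); [auto|auto|lia|rewrite Hsr, HRn; auto]).
    rewrite Hsr in Ez1, Ez2.
    apply Rmult_eq_reg_l in Ez1; [|lra]. apply Rmult_eq_reg_l in Ez2; [|lra].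
    destruct (same_angle _ _ Ez1 Ez2) as [q Hq].
    assert (HnZ : (0 < Z.of_nat n)%Z) by lia.
    pose proof (Z.mod_pos_bound q (Z.of_nat n) HnZ) as Hmod.
    pose proof (Z.div_mod q (Z.of_nat n) ltac:(lia)) as Hdm.
    set (t := (q / Z.of_nat n)%Z) in *. set (r := (q mod Z.of_nat n)%Z) in *.
    exists (Z.to_nat r). split; [lia|].
    assert (Hk : INR (Z.to_nat r) = IZR r) by (rewrite INR_IZR_INZ; f_equal; lia).
    assert (Hph : ph = ang (Z.to_nat r) + 2 * IZR t * PI).
    { unfold ang. rewrite Hk.
      assert (IZR q = INR n * IZR t + IZR r) by (rewrite Hdm at 1; rewrite plus_IZR, mult_IZR, <- INR_IZR_INZ; ring).
      apply Rmult_eq_reg_l with (INR n); [|lra].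
      replace (INR n * ((th + 2 * IZR r * PI) / INR n + 2 * IZR t * PI)) with (th + 2 * (INR n * IZR t + IZR r) * PI) by (field; lra).
      rewrite <- H. lra. }
    unfold root. rewrite Hx, Hy, HsR, Hph, cosZ, sinZ. reflexivity. }
  exists (map root (seq 0 n)). split; [rewrite length_map, length_seq; auto|]. split.
  - apply Injective_map_NoDup_in; [|apply seq_NoDup].
    intros j k Hj Hk. rewrite in_seq in Hj, Hk. apply Hinj; lia.
  - intros z. rewrite in_map_iff. split.
    + intros [k [Ek _]]. rewrite <- Ek. apply Hroot.
    + intros Hz. destruct (Hcomp z Hz) as [k [Hk Ez]]. exists k; split; auto. rewrite in_seq; lia.
Qed.

Lemma root_exists n c : (1 <= n)%nat -> exists z, Cpow z n = c.
Proof.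
  intros Hn. destruct (Req_dec (fst c) 0) as [E1|E1]; [destruct (Req_dec (snd c) 0) as [E2|E2]|].
  - exists (0,0). rewrite Cpow_0 by auto. destruct c; simpl in *; subst; auto.
  - destruct (roots_list n c Hn) as [L [HL [_ HI]]].
    left; intro E; subst; simpl in *; auto.
    destruct L as [|z L]; simpl in HL; [lia|]. exists z. apply HI. simpl; auto.
  - destruct (roots_list n c Hn) as [L [HL [_ HI]]].
    left; intro E; subst; simpl in *; auto.
    destruct L as [|z L]; simpl in HL; [lia|]. exists z. apply HI. simpl; auto.
Qed.

Lemma CD_ext f d d' : CD f d -> d = d' -> CD f d'.
Proof. intros; subst; auto. Qed.

Lemma Tmap_FDeriv l m p : exists J, FDeriv (Tmap l m) p J.
Proof.
  pose proof (CFD_Kmap l m (fun q => (c2 q, c3 q)) (fun q => (c0 q, c1 q)) p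
     (CFD_pair _ _ p (FD1ex_c2 p) (FD1ex_c3 p)) (CFD_pair _ _ p (FD1ex_c0 p) (FD1ex_c1 p))) as [HK1 HK2].
  apply FDeriv_of.
  - exact (FD1ex_c2 p).
  - exact (FD1ex_c3 p).
  - exact HK1.
  - exact HK2.
Qed.

Lemma Tmap_row01 l m p J j : (j < 4)%nat -> FDeriv (Tmap l m) p J ->
  J 0%nat j = coord (basis j) 2 /\ J 1%nat j = coord (basis j) 3.
Proof.
  intros Hj HF. split.
  - eapply uniqueness_limite. apply (FDeriv_partial (Tmap l m) p J 0 j); auto; lia.
    exact (dlin (c2 p) (coord (basis j) 2)).
  - eapply uniqueness_limite. apply (FDeriv_partial (Tmap l m) p J 1 j); auto; lia.
    exact (dlin (c3 p) (coord (basis j) 3)).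
Qed.

Lemma Tmap_row23 l m p J j : (j < 4)%nat -> FDeriv (Tmap l m) p J ->
  let K := Kder l m (c2 p, c3 p) (c0 p, c1 p) (coord (basis j) 2, coord (basis j) 3)
                 (coord (basis j) 0, coord (basis j) 1) in
  J 2%nat j = fst K /\ J 3%nat j = snd K.
Proof.
  intros Hj HF K.
  pose proof (CD_Kmap l m _ _ _ _ (CD_lin (c2 p) (c3 p) (coord (basis j) 2) (coord (basis j) 3))
                                  (CD_lin (c0 p) (c1 p) (coord (basis j) 0) (coord (basis j) 1))) as H.
  cbv beta in H. rewrite !Rmult_0_l, !Rplus_0_r in H. destruct H as [H1 H2].
  split.
  - eapply uniqueness_limite. apply (FDeriv_partial (Tmap l m) p J 2 j); auto; lia. exact H1.
  - eapply uniqueness_limite. apply (FDeriv_partial (Tmap l m) p J 3 j); auto; lia. exact H2.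
Qed.

Lemma fold_zero (f : nat -> R) cols : (forall j, In j cols -> f j = 0) ->
  fold_right Rplus 0 (map f cols) = 0.
Proof.
  induction cols; simpl; intros H; auto. rewrite H by auto. rewrite IHcols by auto. ring.
Qed.

Lemma zero_col_dep J cols k : In k cols ->
  J 0%nat k = 0 -> J 1%nat k = 0 -> J 2%nat k = 0 -> J 3%nat k = 0 -> ~ cols_indep J cols.
Proof.
  intros Hk H0 H1 H2 H3 HI.
  specialize (HI (fun j => if Nat.eqb j k then 1 else 0)).
  assert (1 = 0). {
    replace 1 with ((fun j => if Nat.eqb j k then 1 else 0) k) by (simpl; rewrite Nat.eqb_refl; auto).
    apply HI; auto. intros i Hi. apply fold_zero. intros j _.
    destruct (Nat.eqb_spec j k).
    - subst. destruct i as [|[|[|[|i]]]]; try lia; [rewrite H0|rewrite H1|rewrite H2|rewrite H3]; ring.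
    - ring. }
  lra.
Qed.

Lemma pigeon cols : length cols = 3%nat -> valid_cols cols -> In 0%nat cols \/ In 1%nat cols.
Proof.
  intros Hl [Hnd Hf].
  destruct cols as [|a [|b [|c [|d cols]]]]; simpl in Hl; try lia.
  inversion Hf as [|? ? Ha Hf1]; subst. inversion Hf1 as [|? ? Hb Hf2]; subst.
  inversion Hf2 as [|? ? Hc _]; subst.
  inversion Hnd as [|? ? Hn1 Hnd1]; subst. inversion Hnd1 as [|? ? Hn2 _]; subst.
  simpl in Hn1, Hn2. simpl. lia.
Qed.

Lemma indep_k23 J k : (k = 0 \/ k = 1)%nat -> J 0%nat k = 0 -> J 1%nat k = 0 ->
  (J 2%nat k <> 0 \/ J 3%nat k <> 0) ->
  J 0%nat 2%nat = 1 -> J 0%nat 3%nat = 0 -> J 1%nat 2%nat = 0 -> J 1%nat 3%nat = 1 ->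
  cols_indep J (k :: 2 :: 3 :: nil)%nat.
Proof.
  intros Hk H0 H1 Hnz A B C D c Hc.
  pose proof (Hc 0%nat ltac:(lia)) as E0. pose proof (Hc 1%nat ltac:(lia)) as E1.
  pose proof (Hc 2%nat ltac:(lia)) as E2. pose proof (Hc 3%nat ltac:(lia)) as E3.
  simpl in E0, E1, E2, E3. rewrite H0, A, B in E0. rewrite H1, C, D in E1.
  assert (c 2%nat = 0) by lra. assert (c 3%nat = 0) by lra.
  rewrite H, H2 in E2, E3.
  assert (c k = 0) by (destruct Hnz; nra).
  intros j Hj. simpl in Hj. destruct Hj as [<-|[<-|[<-|[]]]]; auto.
Qed.

Lemma valid_k23 k : (k = 0 \/ k = 1)%nat -> valid_cols (k :: 2 :: 3 :: nil)%nat.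
Proof.
  intros Hk. split.
  - constructor. simpl; lia. constructor. simpl; lia. constructor. simpl; tauto. constructor.
  - apply Forall_forall; intros x Hx; simpl in Hx; lia.
Qed.

Lemma Tmap_rank l m (hl : (2 <= l)%nat) (hm : (1 <= m)%nat) p J :
  FDeriv (Tmap l m) p J -> (rank4 J 2 <-> p = zero4).
Proof.
  intros HF.
  assert (R0 : forall j, (j < 4)%nat -> J 0%nat j = coord (basis j) 2 /\ J 1%nat j = coord (basis j) 3)
    by (intros; apply (Tmap_row01 l m p J); auto).
  destruct (R0 0%nat ltac:(lia)) as [A00 A10]. destruct (R0 1%nat ltac:(lia)) as [A01 A11].
  destruct (R0 2%nat ltac:(lia)) as [A02 A12]. destruct (R0 3%nat ltac:(lia)) as [A03 A13].
  simpl in A00, A10, A01, A11, A02, A12, A03, A13.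
  destruct (Tmap_row23 l m p J 0 ltac:(lia) HF) as [B20 B30].
  destruct (Tmap_row23 l m p J 1 ltac:(lia) HF) as [B21 B31].
  simpl in B20, B30, B21, B31.
  unfold Kder in B20, B30, B21, B31. rewrite !dpow_eq in B20, B30, B21, B31.
  assert (Hpl : pred l = S (pred (pred l))) by lia.
  remember (Cpow (c0 p, c1 p) (pred l)) as U eqn:EU. remember (Cpow (c2 p, c3 p) m) as V eqn:EV.
  remember (Cpow (c2 p, c3 p) (pred m)) as W eqn:EW.
  destruct U as [u1 u2], V as [v1 v2], W as [w1 w2].
  unfold Cadd, Cmul, Cconj in B20, B30, B21, B31; simpl in B20, B30, B21, B31.
  assert (HL : 0 < INR l) by (apply lt_0_INR; lia).
  split.
  - intros [_ Hno].
    assert (Z20 : J 2%nat 0%nat = 0).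
    { destruct (Req_dec (J 2%nat 0%nat) 0) as [|N]; auto. exfalso.
      apply (Hno (0 :: 2 :: 3 :: nil)%nat); [reflexivity| apply valid_k23; lia |].
      apply indep_k23; auto. }
    assert (Z30 : J 3%nat 0%nat = 0).
    { destruct (Req_dec (J 3%nat 0%nat) 0) as [|N]; auto. exfalso.
      apply (Hno (0 :: 2 :: 3 :: nil)%nat); [reflexivity| apply valid_k23; lia |].
      apply indep_k23; auto. }
    assert (Z21 : J 2%nat 1%nat = 0).
    { destruct (Req_dec (J 2%nat 1%nat) 0) as [|N]; auto. exfalso.
      apply (Hno (1 :: 2 :: 3 :: nil)%nat); [reflexivity| apply valid_k23; lia |].
      apply indep_k23; auto. }
    assert (Z31 : J 3%nat 1%nat = 0).
    { destruct (Req_dec (J 3%nat 1%nat) 0) as [|N]; auto. exfalso.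
      apply (Hno (1 :: 2 :: 3 :: nil)%nat); [reflexivity| apply valid_k23; lia |].
      apply indep_k23; auto. }
    rewrite B20 in Z20. rewrite B30 in Z30. rewrite B21 in Z21. rewrite B31 in Z31.
    assert (u1 = 0 /\ u2 = 0 /\ v1 = 0 /\ v2 = 0) as [-> [-> [-> ->]]].
    { ring_simplify in Z20. ring_simplify in Z30. ring_simplify in Z21. ring_simplify in Z31.
      repeat split; nra. }
    assert (Ez : (c0 p, c1 p) = (0,0)).
    { destruct (Req_dec (fst (c0 p, c1 p)) 0); destruct (Req_dec (snd (c0 p, c1 p)) 0).
      - simpl in *; apply pair_eq; auto.
      - exfalso. apply (Cpow_nz (c0 p, c1 p) (pred l)); [intro E; injection E; intros; simpl in *; lra| auto].
      - exfalso. apply (Cpow_nz (c0 p, c1 p) (pred l)); [intro E; injection E; intros; simpl in *; lra| auto].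
      - exfalso. apply (Cpow_nz (c0 p, c1 p) (pred l)); [intro E; injection E; intros; simpl in *; lra| auto]. }
    assert (Ew : (c2 p, c3 p) = (0,0)).
    { destruct (Req_dec (fst (c2 p, c3 p)) 0); destruct (Req_dec (snd (c2 p, c3 p)) 0).
      - simpl in *; apply pair_eq; auto.
      - exfalso. apply (Cpow_nz (c2 p, c3 p) m); [intro E; injection E; intros; simpl in *; lra| auto].
      - exfalso. apply (Cpow_nz (c2 p, c3 p) m); [intro E; injection E; intros; simpl in *; lra| auto].
      - exfalso. apply (Cpow_nz (c2 p, c3 p) m); [intro E; injection E; intros; simpl in *; lra| auto]. }
    injection Ez as E0 E1. injection Ew as E2 E3.
    destruct p; simpl in *; subst; reflexivity.
  - intros Hp. subst p. simpl in EU, EV, EW.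
    rewrite Cpow_0 in EU by lia. rewrite Cpow_0 in EV by lia.
    injection EU as -> ->. injection EV as -> ->.
    split.
    + exists (2 :: 3 :: nil)%nat. split; [reflexivity|]. split.
      * split. constructor. simpl; lia. constructor. simpl; tauto. constructor. apply Forall_forall; intros x Hx; simpl in Hx; lia.
      * intros c Hc. pose proof (Hc 0%nat ltac:(lia)) as E0. pose proof (Hc 1%nat ltac:(lia)) as E1.
        simpl in E0, E1. rewrite A02, A03 in E0. rewrite A12, A13 in E1.
        intros k Hk. simpl in Hk. destruct Hk as [<-|[<-|[]]]; lra.
    + intros cols Hl Hv. destruct (pigeon cols Hl Hv) as [H|H].
      * apply (zero_col_dep J cols 0); auto. rewrite B20; ring. rewrite B30; ring.
      * apply (zero_col_dep J cols 1); auto. rewrite B21; ring. rewrite B31; ring.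
Qed.

Lemma part1 l m (hl : (2 <= l)%nat) (hm : (1 <= m)%nat) :
  forall p : R4, exists J : Mat, FDeriv (Tmap l m) p J /\ (rank4 J 2 <-> p = zero4).
Proof.
  intros p. destruct (Tmap_FDeriv l m p) as [J HJ]. exists J; split; auto. apply (Tmap_rank l m); auto.
Qed.

Definition ga (l : nat) (x : R4) : Defs.C := Cmul (INR l, 0) (Cpow (c2 x, c3 x) (pred l)).
Definition gb (m : nat) (x : R4) : Defs.C := Cpow (c0 x, c1 x) m.
Definition gh (l m : nat) (x : R4) : R4 :=
  mkR4 (fst (ga l x) + fst (gb m x)) (snd (ga l x) + snd (gb m x))
       (- snd (ga l x) + snd (gb m x)) (fst (ga l x) - fst (gb m x)).

Lemma gh_is_ghat l m : is_ghat l m (gh l m).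
Proof.
  intros x.
  pose proof (CD_Kmap l m _ _ _ _ (CD_lin (c0 x) (c1 x) 0 0) (CD_lin (c2 x) (c3 x) 1 0)) as H2.
  pose proof (CD_Kmap l m _ _ _ _ (CD_lin (c0 x) (c1 x) 0 0) (CD_lin (c2 x) (c3 x) 0 1)) as H3.
  cbv beta in H2, H3. rewrite !Rmult_0_l, !Rplus_0_r in H2, H3.
  destruct H2 as [H2a H2b]. destruct H3 as [H3a H3b].
  unfold Kder in *. rewrite !dpow_eq in H2a, H2b, H3a, H3b.
  unfold gh, ga, gb. simpl c0; simpl c1; simpl c2; simpl c3.
  remember (Cpow (c2 x, c3 x) (pred l)) as U. remember (Cpow (c0 x, c1 x) m) as V.
  remember (Cpow (c0 x, c1 x) (pred m)) as W.
  destruct U as [u1 u2], V as [v1 v2], W as [w1 w2].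
  unfold Cadd, Cmul, Cconj in *; simpl in *.
  unfold is_partial, Acomp, Bcomp.
  repeat split.
  - eapply dl_ext. exact H2a. ring.
  - eapply dl_ext. exact H2b. ring.
  - eapply dl_ext. exact H3a. ring.
  - eapply dl_ext. exact H3b. ring.
Qed.

Lemma CFD_ga l x : CFD (ga l) x.
Proof.
  unfold ga. apply (CFD_mul (fun _ => (INR l, 0)) (fun q => Cpow (c2 q, c3 q) (pred l))).
  apply CFD_const. apply CFD_pow. apply CFD_pair. apply FD1ex_c2. apply FD1ex_c3.
Qed.
Lemma CFD_gb m x : CFD (gb m) x.
Proof.
  unfold gb. apply CFD_pow. apply CFD_pair. apply FD1ex_c0. apply FD1ex_c1.
Qed.

Lemma gh_FDeriv l m x : exists J, FDeriv (gh l m) x J.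
Proof.
  destruct (CFD_ga l x) as [A1 A2]. destruct (CFD_gb m x) as [B1 B2].
  apply FDeriv_of; unfold gh; simpl.
  - apply (FD1ex_add (fun q => fst (ga l q)) (fun q => fst (gb m q))); auto.
  - apply (FD1ex_add (fun q => snd (ga l q)) (fun q => snd (gb m q))); auto.
  - apply (FD1ex_add (fun q => - snd (ga l q)) (fun q => snd (gb m q))); auto.
    apply (FD1ex_opp (fun q => snd (ga l q))); auto.
  - apply (FD1ex_sub (fun q => fst (ga l q)) (fun q => fst (gb m q))); auto.
Qed.

Definition Da (l : nat) (x : R4) (j : nat) : Defs.C :=
  Cmul (INR l, 0) (dpow (c2 x, c3 x) (coord (basis j) 2, coord (basis j) 3) (pred l)).
Definition Db (m : nat) (x : R4) (j : nat) : Defs.C :=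
  dpow (c0 x, c1 x) (coord (basis j) 0, coord (basis j) 1) m.

Lemma CD_ga l x j : CD (fun t => ga l (vadd x (vscale t (basis j)))) (Da l x j).
Proof.
  pose proof (CD_mul (fun _ => (INR l, 0)) _ _ _ (CD_const (INR l, 0))
     (CD_pow _ _ (pred l) (CD_lin (c2 x) (c3 x) (coord (basis j) 2) (coord (basis j) 3)))) as H.
  cbv beta in H. rewrite !Rmult_0_l, !Rplus_0_r in H.
  eapply CD_ext. exact H. unfold Da.
  remember (Cpow (c2 x, c3 x) (pred l)) as U. remember (dpow (c2 x, c3 x) (coord (basis j) 2, coord (basis j) 3) (pred l)) as V.
  destruct U, V. unfold Cadd, Cmul; simpl. apply pair_eq; ring.
Qed.

Lemma CD_gb m x j : CD (fun t => gb m (vadd x (vscale t (basis j)))) (Db m x j).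
Proof.
  pose proof (CD_pow _ _ m (CD_lin (c0 x) (c1 x) (coord (basis j) 0) (coord (basis j) 1))) as H.
  cbv beta in H. rewrite !Rmult_0_l, !Rplus_0_r in H. exact H.
Qed.

Definition Jgh (l m : nat) (x : R4) : Mat := fun i j =>
  match i with
  | 0%nat => fst (Da l x j) + fst (Db m x j)
  | 1%nat => snd (Da l x j) + snd (Db m x j)
  | 2%nat => - snd (Da l x j) + snd (Db m x j)
  | _ => fst (Da l x j) - fst (Db m x j)
  end.

Lemma gh_entries l m x J : FDeriv (gh l m) x J -> forall i j, (i < 4)%nat -> (j < 4)%nat -> J i j = Jgh l m x i j.
Proof.
  intros HF i j Hi Hj.
  destruct (CD_ga l x j) as [A1 A2]. destruct (CD_gb m x j) as [B1 B2].
  destruct i as [|[|[|[|i]]]]; try lia; unfold Jgh.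
  - eapply uniqueness_limite. apply (FDeriv_partial (gh l m) x J 0 j); auto.
    apply (dplus (fun t => fst (ga l (vadd x (vscale t (basis j))))) (fun t => fst (gb m (vadd x (vscale t (basis j)))))); auto.
  - eapply uniqueness_limite. apply (FDeriv_partial (gh l m) x J 1 j); auto.
    apply (dplus (fun t => snd (ga l (vadd x (vscale t (basis j))))) (fun t => snd (gb m (vadd x (vscale t (basis j)))))); auto.
  - eapply uniqueness_limite. apply (FDeriv_partial (gh l m) x J 2 j); auto.
    apply (dplus (fun t => - snd (ga l (vadd x (vscale t (basis j))))) (fun t => snd (gb m (vadd x (vscale t (basis j)))))); auto.
    apply (dopp (fun t => snd (ga l (vadd x (vscale t (basis j)))))); auto.
  - eapply uniqueness_limite. apply (FDeriv_partial (gh l m) x J 3 j); auto.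
    apply (dminus (fun t => fst (ga l (vadd x (vscale t (basis j))))) (fun t => fst (gb m (vadd x (vscale t (basis j)))))); auto.
Qed.

Lemma det4_ext J K : (forall i j, (i < 4)%nat -> (j < 4)%nat -> J i j = K i j) -> det4 J = det4 K.
Proof.
  intros H. unfold det4, detn, minor; simpl.
  rewrite !(H 0%nat 0%nat), !(H 0%nat 1%nat), !(H 0%nat 2%nat), !(H 0%nat 3%nat) by lia.
  rewrite !(H 1%nat 0%nat), !(H 1%nat 1%nat), !(H 1%nat 2%nat), !(H 1%nat 3%nat) by lia.
  rewrite !(H 2%nat 0%nat), !(H 2%nat 1%nat), !(H 2%nat 2%nat), !(H 2%nat 3%nat) by lia.
  rewrite !(H 3%nat 0%nat), !(H 3%nat 1%nat), !(H 3%nat 2%nat), !(H 3%nat 3%nat) by lia.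
  reflexivity.
Qed.

Definition detF (l m : nat) (x : R4) : R :=
  4 * (INR m * INR m) * (INR l * INR l) * (INR (pred l) * INR (pred l)) *
  Cnorm2 (Cpow (c0 x, c1 x) (pred m)) * Cnorm2 (Cpow (c2 x, c3 x) (pred (pred l))).

Lemma det_Jgh l m x : det4 (Jgh l m x) = detF l m x.
Proof.
  unfold det4, detn, minor, Jgh, Da, Db, detF; simpl.
  rewrite !dpow_eq.
  remember (Cpow (c0 x, c1 x) (pred m)) as U. remember (Cpow (c2 x, c3 x) (pred (pred l))) as V.
  destruct U as [u1 u2], V as [v1 v2]. unfold Cnorm2, Cmul; simpl. ring.
Qed.

Lemma detF_nonneg l m x : 0 <= detF l m x.
Proof.
  unfold detF. pose proof (Cnorm2_nonneg (Cpow (c0 x, c1 x) (pred m))).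
  pose proof (Cnorm2_nonneg (Cpow (c2 x, c3 x) (pred (pred l)))).
  assert (0 <= INR m * INR m) by nra. assert (0 <= INR l * INR l) by nra.
  assert (0 <= INR (pred l) * INR (pred l)) by nra.
  set (a1 := INR m * INR m) in *. set (a2 := INR l * INR l) in *. set (a3 := INR (pred l) * INR (pred l)) in *.
  set (a4 := Cnorm2 (Cpow (c0 x, c1 x) (pred m))) in *. set (a5 := Cnorm2 (Cpow (c2 x, c3 x) (pred (pred l)))) in *.
  repeat apply Rmult_le_pos. all: try lra. all: apply pos_INR.
Qed.

Lemma gh_det l m x J : FDeriv (gh l m) x J -> det4 J = detF l m x.
Proof. intros H. rewrite <- det_Jgh. apply det4_ext. apply gh_entries; auto. Qed.

Definition ca (l : nat) (y : R4) : Defs.C := ((c0 y + c3 y) / (2 * INR l), (c1 y - c2 y) / (2 * INR l)).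
Definition cb (y : R4) : Defs.C := ((c0 y - c3 y) / 2, (c1 y + c2 y) / 2).

Lemma gh_eq_iff l m x y : (1 <= l)%nat ->
  gh l m x = y <-> (Cpow (c2 x, c3 x) (pred l) = ca l y /\ Cpow (c0 x, c1 x) m = cb y).
Proof.
  intros Hl. assert (HL : 0 < INR l) by (apply lt_0_INR; lia).
  unfold gh, ga, gb, ca, cb.
  remember (Cpow (c2 x, c3 x) (pred l)) as U. remember (Cpow (c0 x, c1 x) m) as V.
  destruct U as [u1 u2], V as [v1 v2]. destruct y as [y0 y1 y2 y3]. unfold Cmul; simpl.
  split.
  - intros E. injection E as E0 E1 E2 E3. split; apply pair_eq.
    all: try (apply Rmult_eq_reg_l with (2 * INR l); [|lra]; field_simplify; [|lra]).
    all: lra.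
  - intros [E1 E2]. injection E1 as A1 A2. injection E2 as B1 B2. subst.
    f_equal; field; lra.
Qed.

Lemma gh_zero l m : (2 <= l)%nat -> (1 <= m)%nat -> gh l m zero4 = zero4.
Proof.
  intros Hl Hm. apply gh_eq_iff; [lia|]. unfold ca, cb, zero4; simpl.
  rewrite !Cpow_0 by lia. unfold Rdiv. split; apply pair_eq; ring.
Qed.

Lemma sq_sum_lt1 y : norm4 y < 1 -> c0 y * c0 y + c1 y * c1 y + c2 y * c2 y + c3 y * c3 y < 1.
Proof.
  rewrite norm4_eq. intros H.
  set (S := c0 y * c0 y + c1 y * c1 y + c2 y * c2 y + c3 y * c3 y) in *.
  destruct (Rlt_dec S 1); auto. exfalso.
  assert (sqrt 1 <= sqrt S) by (apply sqrt_le_1_alt; lra). rewrite sqrt_1 in H0. lra.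
Qed.

Lemma cb_small y : norm4 y < 1 -> Cnorm2 (cb y) < 1.
Proof.
  intros H. apply sq_sum_lt1 in H. unfold cb, Cnorm2; simpl.
  assert (0 <= (c0 y + c3 y) * (c0 y + c3 y) + (c1 y - c2 y) * (c1 y - c2 y)) by (apply Rplus_le_le_0_compat; apply Rle_0_sqr).
  assert ((c0 y - c3 y) / 2 * ((c0 y - c3 y) / 2) + (c1 y + c2 y) / 2 * ((c1 y + c2 y) / 2) =
    (2 * (c0 y * c0 y + c1 y * c1 y + c2 y * c2 y + c3 y * c3 y) - ((c0 y + c3 y) * (c0 y + c3 y) + (c1 y - c2 y) * (c1 y - c2 y))) / 4) by field.
  lra.
Qed.

Lemma ca_small l y : (1 <= l)%nat -> norm4 y < 1 -> Cnorm2 (ca l y) < 1.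
Proof.
  intros Hl H. apply sq_sum_lt1 in H. assert (HL : 1 <= INR l) by (apply (le_INR 1); lia).
  unfold ca, Cnorm2; simpl.
  replace ((c0 y + c3 y) / (2 * INR l) * ((c0 y + c3 y) / (2 * INR l)) +
           (c1 y - c2 y) / (2 * INR l) * ((c1 y - c2 y) / (2 * INR l)))
    with (((c0 y + c3 y) * (c0 y + c3 y) + (c1 y - c2 y) * (c1 y - c2 y)) / (4 * (INR l * INR l))) by (field; lra).
  apply Rmult_lt_reg_r with (4 * (INR l * INR l)); [nra|].
  unfold Rdiv. rewrite Rmult_assoc, Rinv_l by nra.
  assert (0 <= (c0 y - c3 y) * (c0 y - c3 y) + (c1 y + c2 y) * (c1 y + c2 y)) by (apply Rplus_le_le_0_compat; apply Rle_0_sqr).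
  assert ((c0 y + c3 y) * (c0 y + c3 y) + (c1 y - c2 y) * (c1 y - c2 y) =
    2 * (c0 y * c0 y + c1 y * c1 y + c2 y * c2 y + c3 y * c3 y) - ((c0 y - c3 y) * (c0 y - c3 y) + (c1 y + c2 y) * (c1 y + c2 y))) by ring.
  assert (4 <= 4 * (INR l * INR l)) by nra.
  lra.
Qed.

Lemma norm4_small x : Cnorm2 (c0 x, c1 x) < 1 -> Cnorm2 (c2 x, c3 x) < 1 -> norm4 x < 2.
Proof.
  intros H1 H2. unfold Cnorm2 in *; simpl in *. rewrite norm4_eq.
  rewrite <- (sqrt_square 2) by lra. apply sqrt_lt_1_alt. split; nra.
Qed.

Lemma NoDup_list_prod_ {A B : Type} (L1 : list A) (L2 : list B) :
  NoDup L1 -> NoDup L2 -> NoDup (list_prod L1 L2).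
Proof.
  intros H1 H2. induction H1 as [|a L1 Ha H1 IH]; simpl; [constructor|].
  apply NoDup_app; auto.
  - apply Injective_map_NoDup; auto. intros u v E; injection E; auto.
  - intros [x y] Hx Hy. apply in_map_iff in Hx. destruct Hx as [z [Ez _]]. injection Ez as <- _.
    apply in_prod_iff in Hy. tauto.
Qed.

Lemma build_pts (f : R4 -> R4) (L : list R4) :
  (forall x, In x L -> exists J, FDeriv f x J /\ 0 < det4 J) ->
  exists pts : list (R4 * Mat), map fst pts = L /\
    Forall (fun p => FDeriv f (fst p) (snd p)) pts /\ Forall (fun p => 0 < det4 (snd p)) pts.
Proof.
  induction L as [|x L IH]; intros H.
  - exists nil; repeat split; constructor.
  - destruct (H x (or_introl eq_refl)) as [J [HJ1 HJ2]].
    destruct IH as [pts [E [F1 F2]]]. { intros; apply H; simpl; auto. }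
    exists ((x, J) :: pts). simpl. rewrite E. repeat split; auto.
Qed.

Lemma sum_pos (pts : list (R4 * Mat)) : Forall (fun p => 0 < det4 (snd p)) pts ->
  fold_right Z.add 0%Z (map (fun p => sgnZ (det4 (snd p))) pts) = Z.of_nat (length pts).
Proof.
  induction 1; simpl; auto.
  rewrite IHForall. unfold sgnZ. destruct (Rlt_dec 0 (det4 (snd x))); [|lra]. lia.
Qed.

Definition mk4 (pr : Defs.C * Defs.C) : R4 :=
  mkR4 (fst (fst pr)) (snd (fst pr)) (fst (snd pr)) (snd (snd pr)).

Lemma mk4_inj : Injective mk4.
Proof.
  intros [[a b] [c d]] [[a' b'] [c' d']] E. unfold mk4 in E; simpl in E. injection E; intros; subst; auto.
Qed.

Lemma C_eq0_dec (c : Defs.C) : c = (0,0) \/ c <> (0,0).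
Proof.
  destruct c as [a b]. destruct (Req_dec a 0); destruct (Req_dec b 0); subst; auto;
  right; intro E; injection E; intros; lra.
Qed.

Lemma part2 l m (hl : (2 <= l)%nat) (hm : (1 <= m)%nat) :
  IsLocalDegree (gh l m) (Z.of_nat (m * (l - 1))).
Proof.
  assert (HL : 0 < INR l) by (apply lt_0_INR; lia).
  split. { apply gh_zero; auto. }
  exists 2. split; [lra|]. split.
  { intros x _ Hx. apply gh_eq_iff in Hx; [|lia]. destruct Hx as [Hz Hw].
    unfold ca, cb, zero4 in Hz, Hw; simpl in Hz, Hw.
    replace ((0 + 0) / (2 * INR l)) with 0 in Hz by (unfold Rdiv; ring).
    replace ((0 - 0) / (2 * INR l)) with 0 in Hz by (unfold Rdiv; ring).
    replace ((0 - 0) / 2) with 0 in Hw by (unfold Rdiv; ring).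
    replace ((0 + 0) / 2) with 0 in Hw by (unfold Rdiv; ring).
    destruct (C_eq0_dec (c2 x, c3 x)) as [Ez|Ez]; [|exfalso; apply (Cpow_nz _ (pred l) Ez Hz)].
    destruct (C_eq0_dec (c0 x, c1 x)) as [Ew|Ew]; [|exfalso; apply (Cpow_nz _ m Ew Hw)].
    injection Ez as E2 E3. injection Ew as E0 E1.
    destruct x; simpl in *; subst; reflexivity. }
  exists 1. split; [lra|]. intros y Hy Hreg.
  set (A := ca l y). set (B := cb y).
  assert (HA1 : Cnorm2 A < 1) by (apply ca_small; auto; lia).
  assert (HB1 : Cnorm2 B < 1) by (apply cb_small; auto).
  assert (Hball : forall x, gh l m x = y -> norm4 x < 2).
  { intros x Hx. apply gh_eq_iff in Hx; [|lia]. destruct Hx as [Hz Hw].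
    apply norm4_small.
    - apply (Cnorm2_lt1 _ m B); auto.
    - apply (Cnorm2_lt1 _ (pred l) A); auto; lia. }
  assert (Hdet : forall x, gh l m x = y -> detF l m x <> 0).
  { intros x Hx. destruct (Hreg x (Hball x Hx) Hx) as [J [HJ HJd]]. rewrite <- (gh_det l m x J); auto. }
  assert (HB : B <> (0,0) \/ m = 1%nat).
  { destruct (Nat.eq_dec m 1) as [|Hm1]; auto. left. intro EB.
    destruct (root_exists (pred l) A ltac:(lia)) as [z0 Hz0].
    set (x0 := mkR4 0 0 (fst z0) (snd z0)).
    assert (Hx0 : gh l m x0 = y).
    { apply gh_eq_iff; [lia|]. unfold x0; simpl. split.
      - destruct z0; auto.
      - rewrite Cpow_0 by lia. fold B. auto. }
    apply (Hdet x0 Hx0). unfold detF, x0; simpl. rewrite (Cpow_0 (pred m)) by lia. unfold Cnorm2; simpl. ring. }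
  assert (HA : A <> (0,0) \/ pred l = 1%nat).
  { destruct (Nat.eq_dec (pred l) 1) as [|Hl1]; auto. left. intro EA.
    destruct (root_exists m B ltac:(lia)) as [w0 Hw0].
    set (x0 := mkR4 (fst w0) (snd w0) 0 0).
    assert (Hx0 : gh l m x0 = y).
    { apply gh_eq_iff; [lia|]. unfold x0; simpl. split.
      - rewrite Cpow_0 by lia. fold A. auto.
      - destruct w0; auto. }
    apply (Hdet x0 Hx0). unfold detF, x0; simpl. rewrite (Cpow_0 (pred (pred l))) by lia. unfold Cnorm2; simpl. ring. }
  destruct (roots_list m B hm HB) as [W [HWl [HWnd HWi]]].
  destruct (roots_list (pred l) A ltac:(lia) HA) as [Zs [HZl [HZnd HZi]]].
  set (Lpts := map mk4 (list_prod W Zs)).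
  assert (Hchar : forall x, In x Lpts <-> (norm4 x < 2 /\ gh l m x = y)).
  { intros x. unfold Lpts. rewrite in_map_iff. split.
    - intros [[w z] [Ex Hin]]. apply in_prod_iff in Hin. destruct Hin as [Hw Hz].
      apply HWi in Hw. apply HZi in Hz.
      assert (Hg : gh l m x = y).
      { apply gh_eq_iff; [lia|]. rewrite <- Ex. unfold mk4; simpl. destruct w, z; simpl; auto. }
      split; auto.
    - intros [_ Hg]. apply gh_eq_iff in Hg; [|lia]. destruct Hg as [Hz Hw].
      exists ((c0 x, c1 x), (c2 x, c3 x)). split.
      + destruct x; reflexivity.
      + apply in_prod_iff. split; [apply HWi | apply HZi]; auto. }
  destruct (build_pts (gh l m) Lpts) as [pts [Ep [F1 F2]]].
  { intros x Hx. apply Hchar in Hx. destruct Hx as [_ Hg].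
    destruct (gh_FDeriv l m x) as [J HJ]. exists J; split; auto.
    rewrite (gh_det l m x J HJ). pose proof (detF_nonneg l m x). pose proof (Hdet x Hg). lra. }
  exists pts. rewrite Ep. split; [|split; [|split]].
  - apply Injective_map_NoDup. apply mk4_inj. apply NoDup_list_prod_; auto.
  - exact Hchar.
  - exact F1.
  - rewrite sum_pos by auto. f_equal.
    rewrite <- (length_map fst pts), Ep. unfold Lpts. rewrite length_map, length_prod, HWl, HZl. lia.
Qed.

Theorem mainTheorem5 (l m : nat) (hl : (2 <= l)%nat) (hm : (1 <= m)%nat) :
  (forall p : R4, exists J : Mat, FDeriv (Tmap l m) p J /\ (rank4 J 2 <-> p = zero4)) /\
  (exists gh : R4 -> R4, is_ghat l m gh /\ IsLocalDegree gh (Z.of_nat (m * (l - 1)))).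
Proof.
  split.
  - apply part1; auto.
  - exists (gh l m). split. apply gh_is_ghat. apply part2; auto.
Qed.
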